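(* Let $\mathbf{B}_{\mathrm{lat}}$ be the (opposite) incidence coalgebra of the lattices of noncrossing partitions and $\mathbf{B}_{\mathrm{opd}}$ the block-substitution bialgebra of noncrossing partitions (both defined in the context). The linear map $\Phi:\mathbf{B}_{\mathrm{lat}}\to\mathbf{B}_{\mathrm{opd}}$ defined by $\Phi(\llbracket P,Q\rrbracket)=P/Q$ is a coalgebra homomorphism.
   Context: For $n\geq1$, $\operatorname{NCP}(n)$ denotes the set of noncrossing partitions of $[n]$ (no $a<c<b<d$ with $a,b$ in one block and $c,d$ in another), ordered by refinement: $P\leq Q$ if each block of $Q$ is a union of blocks of $P$. Partitions of finite linearly ordered sets are identified with partitions of $[m]$ via the order-preserving bijection, and $P_{|X}$ denotes the induced partition on $X$. $\mathbf{B}_{\mathrm{opd}}$ is the free commutative unital algebra generated by all nonempty noncrossing partitions; for $P\leq Q$ in $\operatorname{NCP}(n)$ with $Q=\{\tau_1,\dots,\tau_l\}$, $P/Q:=P_{|\tau_1}\cdots P_{|\tau_l}\in\mathbf{B}_{\mathrm{opd}}$. Its coproduct is $\delta(P)=\sum_{Q\in\operatorname{NCP}(n),\,Q\geq P}Q\otimes P/Q$, extended multiplicatively, and its counit is $\varepsilon(P)=1$ if $P$ has exactly one block and $0$ otherwise. $\mathbf{B}_{\mathrm{lat}}$ is the vector space with basis all intervals $\llbracket P,Q\rrbracket=\{M: P\leq M\leq Q\}$ with $P\leq Q$ in $\operatorname{NCP}(n)$, $n\geq1$, with coproduct $\llbracket P,Q\rrbracket\mapsto\sum_{M\in\llbracket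 P,Q\rrbracket}\llbracket M,Q\rrbracket\otimes\llbracket P,M\rrbracket$ (the opposite of the usual incidence coproduct) and counit $\llbracket P,Q\rrbracket\mapsto\delta_{P,Q}$. *)

(* Defs.v *)
From mathcomp Require Import all_boot all_order all_algebra.
Set Implicit Arguments. Unset Strict Implicit. Unset Printing Implicit Defensive.
Import GRing.Theory.
Local Open Scope ring_scope.

(* Set partitions of [n] are represented as sets of blocks over 'I_n
   (the point i : 'I_n stands for i+1 in [n]). *)

Definition noncrossing (n : nat) (P : {set {set 'I_n}}) : bool :=
  [forall B in P, forall C in P, (B != C) ==>
     ~~ [exists a : 'I_n, exists b : 'I_n, exists c : 'I_n, exists d : 'I_n,
          [&& (a < c)%N, (c < b)%N, (b < d)%N,
              a \in B, b \in B, c \in C & d \in C]]].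

Definition is_ncp (n : nat) (P : {set {set 'I_n}}) : bool :=
  partition P [set: 'I_n] && noncrossing P.

Definition ncp_le (n : nat) (P Q : {set {set 'I_n}}) : bool :=
  [forall C in Q, C == \bigcup_(B in P | B \subset C) B].

Definition ncp_interval (n : nat) (P Q : {set {set 'I_n}}) : seq {set {set 'I_n}} :=
  [seq M <- enum [set: {set {set 'I_n}}] |
     [&& is_ncp M, ncp_le P M & ncp_le M Q ]].

Definition ncp_above (n : nat) (P : {set {set 'I_n}}) : seq {set {set 'I_n}} :=
  [seq Q <- enum [set: {set {set 'I_n}}] | is_ncp Q && ncp_le P Q ].

(* A (possibly non-valid) partition of some [n]: the generators of B_opd
   and basis elements are the valid ones. *)
Definition part := {n : nat & {set {set 'I_n}}}.
Definition mkpart (n : nat) (P : {set {set 'I_n}}) : part :=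
  Tagged (fun m => {set {set 'I_m}}) P.

(* rank of x in X (order-preserving bijection X -> [#|X|]) *)
Definition rk (n : nat) (X : {set 'I_n}) (x : 'I_n) : nat :=
  #|[set y in X | (y < x)%N]|.

(* induced partition P_{|X}, transported to [#|X|] *)
Definition restr (n : nat) (P : {set {set 'I_n}}) (X : {set 'I_n}) : part :=
  @mkpart #|X|
    [set [set i : 'I_#|X| | [exists x in B :&: X, rk X x == i]]
       | B in P & B :&: X != set0].

(* Monomials of B_opd (commutative products of generators) are represented
   by sequences of generators, considered up to permutation. *)
Definition monomial := seq part.

Definition quot (n : nat) (P Q : {set {set 'I_n}}) : monomial :=
  [seq restr P tau | tau <- enum Q].

(* Elements of B_opd (x) B_opd with coefficients in N are represented as
   formal sums (seqs) of pure tensors of monomials. *)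
Definition tens := (monomial * monomial)%type.

Definition tens_equiv (x y : tens) : bool :=
  perm_eq x.1 y.1 && perm_eq x.2 y.2.

Definition coef (k : nzRingType) (b : tens) (s : seq tens) : k :=
  \sum_(x <- s) (tens_equiv x b)%:R.

Definition delta_gen (p : part) : seq tens :=
  [seq ([:: mkpart Q], quot (tagged p) Q) | Q <- ncp_above (tagged p)].

Definition delta_mono (m : monomial) : seq tens :=
  foldr (fun p acc => [seq (x.1 ++ y.1, x.2 ++ y.2) | x <- delta_gen p, y <- acc])
        [:: ([::], [::])] m.

Definition eps_mono (k : nzRingType) (m : monomial) : k :=
  \prod_(p <- m) (#|tagged p| == 1%N)%:R.

(* (Phi (x) Phi) applied to the coproduct of B_lat on [[P,Q]]:
   sum_{M in [[P,Q]]} Phi[[M,Q]] (x) Phi[[P,M]] *)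
Definition lat_delta_Phi (n : nat) (P Q : {set {set 'I_n}}) : seq tens :=
  [seq (quot M Q, quot P M) | M <- ncp_interval P Q].

(* Main.v *)
Require Import Defs.
From mathcomp Require Import all_boot all_order all_algebra.
Import GRing.Theory.
Set Implicit Arguments. Unset Strict Implicit. Unset Printing Implicit Defensive.

Section EV.
Variable n : nat.
Implicit Types X Y B C : {set 'I_n}.

Definition ev X (i : 'I_#|X|) : 'I_n := enum_val i.
Arguments ev : clear implicits.
Definition pre X B : {set 'I_#|X|} := [set i | ev X i \in B].

Lemma card_sep X (p : pred 'I_n) : #|[set y in X | p y]| = count p (enum X).
Proof.
rewrite cardE /enum_mem -size_filter -filter_predI; congr size; apply: eq_filter => y.
by rewrite !inE andbC.
Qed.

Lemma enum_sorted X : sorted (fun x y : 'I_n => (x < y)%N) (enum X).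
Proof.
have -> : enum X = filter (mem X) (enum 'I_n) by rewrite enumT.
apply: sorted_filter; first by move=> a b c; apply: ltn_trans.
have := iota_ltn_sorted 0 n; rewrite -val_enum_ord sorted_map; apply: sub_sorted => a b; done.

Qed.

Lemma index_count (s : seq 'I_n) x : sorted (fun x y : 'I_n => (x < y)%N) s -> x \in s ->
  index x s = count (fun y : 'I_n => (y < x)%N) s.
Proof.
elim: s => [//|a s IH] Hs; rewrite inE /=.
have Hall : all (fun y : 'I_n => (a < y)%N) s.
  by apply: order_path_min Hs; move=> u v w; apply: ltn_trans.
case: eqP => [->|Hxa] /= Hx.
  rewrite ltnn /= add0n eqxx; apply/esym/eqP; rewrite -leqn0 leqNgt -has_count; apply/hasPn => y Hy.
  by rewrite -leqNgt ltnW // (allP Hall).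
have -> : (a == x) = false by apply/eqP => E; apply: Hxa.
rewrite IH ?(path_sorted Hs) //.
by rewrite (allP Hall x Hx).
Qed.

Lemma ev_inj X : injective (ev X).
Proof. exact: enum_val_inj. Qed.

Lemma evP X i : ev X i \in X.
Proof. exact: enum_valP. Qed.

Lemma ev_nth X (x0 : 'I_n) (i : 'I_#|X|) : ev X i = nth x0 (enum X) i.
Proof. exact: enum_val_nth. Qed.

Lemma ev_mono X (i j : 'I_#|X|) : (i < j)%N = (ev X i < ev X j)%N.
Proof.
have H : forall (i j : 'I_#|X|), (i < j)%N -> (ev X i < ev X j)%N.
  move=> a b Hab; have x0 : 'I_n := ev X a; rewrite (ev_nth x0 a) (ev_nth x0 b).
  have Htr : transitive (fun x y : 'I_n => (x < y)%N) by move=> u v w; apply: ltn_trans.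
  by apply: (sorted_ltn_nth Htr x0 (enum_sorted X)) => //; rewrite inE -cardE.
case: (ltngtP i j) => [/H -> //|/H Hji|/val_inj ->]; last by rewrite ltnn.
by apply/esym/negbTE; rewrite -leqNgt ltnW.
Qed.

Lemma ev_surj X x : x \in X -> exists i, x = ev X i.
Proof. move=> Hx; exists (enum_rank_in Hx x); rewrite /ev (enum_rankK_in Hx Hx) //. Qed.

Lemma imset_ev X : ev X @: setT = X.
Proof.
apply/setP => x; apply/imsetP/idP => [[i _ ->]|/ev_surj [i ->]]; first exact: evP.
by exists i.
Qed.

Lemma rk_ev X (i : 'I_#|X|) : rk X (ev X i) = i.
Proof.
rewrite /rk card_sep -index_count ?enum_sorted //; last by rewrite mem_enum evP.
by rewrite (ev_nth (ev X i)) index_uniq ?enum_uniq // -cardE.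
Qed.

Lemma restr_blockE X B : [set i : 'I_#|X| | [exists x in B :&: X, rk X x == i]] = pre X B.
Proof.
apply/setP => i; rewrite !inE; apply/existsP/idP => [[x /andP [] /setIP [Hb Hx] /eqP Hi]|Hi].
  by case: (ev_surj Hx) => j Hj; move: Hi Hb; rewrite Hj rk_ev => /val_inj <-.
by exists (ev X i); rewrite inE evP Hi rk_ev /=.
Qed.

End EV.
Arguments ev {n} X i.
Section Part.
Variable T : finType.
Implicit Types P Q M : {set {set T}}.

Lemma partition_intro M :
  (forall x, exists2 B, B \in M & x \in B) ->
  (forall B C x, B \in M -> C \in M -> x \in B -> x \in C -> B = C) ->
  set0 \notin M -> partition M setT.
Proof.
move=> Hc Hu H0; apply/and3P; split=> //.
  apply/eqP/setP => x; rewrite inE; case: (Hc x) => B HB Hx.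
  by apply/bigcupP; exists B.
apply/trivIsetP => B C HB HC Hne; apply/pred0P => x /=.
apply/negP => /andP [xB xC]; by move/negP: Hne; apply; apply/eqP; apply: Hu xB xC.
Qed.

Lemma partition_cov M x : partition M setT -> exists2 B, B \in M & x \in B.
Proof.
case/and3P => /eqP Hc _ _; have : x \in cover M by rewrite Hc inE.
by case/bigcupP => B HB Hx; exists B.
Qed.

Lemma partition_uniq M B C x : partition M setT -> B \in M -> C \in M -> x \in B -> x \in C -> B = C.
Proof.
case/and3P => _ /trivIsetP Ht _ HB HC xB xC; apply/eqP; apply/negPn/negP => Hne.
by move: (Ht B C HB HC Hne) => /pred0P /(_ x) /=; rewrite xB xC.
Qed.

Lemma partition_ne0 M B : partition M setT -> B \in M -> B != set0.
Proof. by case/and3P => _ _ H0 HB; apply/negP => /eqP E; move: H0; rewrite -E HB. Qed.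

Lemma le_partitionP P Q : partition P setT -> partition Q setT ->
  reflect (forall B, B \in P -> exists2 C, C \in Q & B \subset C)
  [forall C in Q, C == \bigcup_(B in P | B \subset C) B].
Proof.
move=> HP HQ; apply: (iffP idP) => [/forallP H B HB|H].
  case/set0Pn: (partition_ne0 HP HB) => x xB.
  case: (partition_cov x HQ) => C HC xC; exists C => //.
  move: (H C); rewrite HC /= => /eqP E; move: xC; rewrite {1}E => /bigcupP [B' /andP [HB' sB'] xB'].
  by rewrite (partition_uniq HP HB HB' xB xB').
apply/forallP => C; apply/implyP => HC; apply/eqP/setP => x; apply/idP/bigcupP => [xC|[B /andP [_ sB] xB]].
  case: (partition_cov x HP) => B HB xB; exists B => //; rewrite HB /=.
  case: (H B HB) => C' HC' sBC'.
  by rewrite (partition_uniq HQ HC HC' xC (subsetP sBC' x xB)).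
exact: (subsetP sB).
Qed.

End Part.
Definition pr n (X : {set 'I_n}) (R : {set {set 'I_n}}) : {set {set 'I_#|X|}} :=
  [set pre X B | B in R & B :&: X != set0].
Definition liftp n (X : {set 'I_n}) (Q' : {set {set 'I_#|X|}}) : {set {set 'I_n}} :=
  [set (ev X @: B') | B' : {set 'I_#|X|} in Q'].

Arguments liftp {n} X Q'.
Arguments pr {n} X R.

Section PR.
Variable n : nat.
Implicit Types X Y B C : {set 'I_n}.
Implicit Types R : {set {set 'I_n}}.

Lemma ev_pre X B : ev X @: pre X B = B :&: X.
Proof.
apply/setP => x; rewrite inE; apply/imsetP/andP => [[i] | [xB xX]].
  by rewrite inE => Hi ->; rewrite Hi evP.
by case: (ev_surj xX) => i E; exists i; rewrite // inE -E.
Qed.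

Lemma pre_ev X (B' : {set 'I_#|X|}) : pre X (ev X @: B') = B'.
Proof. by apply/setP => i; rewrite inE (mem_imset _ _ (@ev_inj _ X)). Qed.

Lemma restrE R X : restr R X = mkpart (pr X R).
Proof. by rewrite /restr /pr; congr mkpart; apply: eq_imset => B; apply: restr_blockE. Qed.

Lemma pr_lift X (Q' : {set {set 'I_#|X|}}) : set0 \notin Q' -> pr X (liftp X Q') = Q'.
Proof.
move=> H0; apply/setP => S; apply/imsetP/idP => [[B] | HS].
  rewrite inE => /andP [/imsetP [B' HB' ->] _] ->; by rewrite pre_ev.
exists (ev X @: S); last by rewrite pre_ev.
rewrite inE (mem_imset _ _ (imset_inj (@ev_inj _ X))) HS /=.
have -> : ev X @: S :&: X = ev X @: S.
  by apply/setIidPl/subsetP => x /imsetP [i _ ->]; apply: evP.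
by rewrite imset_eq0; apply/negP => /eqP E; move: H0; rewrite -E HS.
Qed.

Lemma ncP R : reflect (forall B C (a b c d : 'I_n), B \in R -> C \in R -> B != C ->
   (a < c)%N -> (c < b)%N -> (b < d)%N -> a \in B -> b \in B -> c \in C -> d \in C -> False)
  (noncrossing R).
Proof.
apply: (iffP forallP) => [H B C a b c d HB HC Hne ac cb bd aB bB cC dC|H B].
  move: (H B); rewrite HB /= => /forallP /(_ C); rewrite HC Hne /= => /negP; apply.
  by apply/existsP; exists a; apply/existsP; exists b; apply/existsP; exists c;
     apply/existsP; exists d; rewrite ac cb bd aB bB cC dC.
apply/implyP => HB; apply/forallP => C; apply/implyP => HC; apply/implyP => Hne.
apply/negP => /existsP [a /existsP [b /existsP [c /existsP [d]]]].
case/and5P => ac cb bd aB /and3P [bB cC dC].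
exact: (H B C a b c d).
Qed.

End PR.

Section PR2.
Variable n : nat.
Implicit Types X Y B C : {set 'I_n}.
Implicit Types R : {set {set 'I_n}}.

Lemma is_ncp_pr R X : is_ncp R -> is_ncp (pr X R).
Proof.
case/andP => HR /ncP HN; apply/andP; split.
  apply: partition_intro.
  - move=> i; case: (partition_cov (ev X i) HR) => B HB xB.
    exists (pre X B); last by rewrite inE.
    apply/imsetP; exists B => //; rewrite inE HB /=; apply/set0Pn; exists (ev X i).
    by rewrite inE xB evP.
  - move=> S1 S2 i /imsetP [B1 + ->] /imsetP [B2 + ->]; rewrite !inE.
    case/andP => H1 _ /andP [H2 _] i1 i2.
    by rewrite (partition_uniq HR H1 H2 i1 i2).
  apply/negP => /imsetP [B]; rewrite inE => /andP [HB /set0Pn [x /setIP [xB xX]]] E.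
  case: (ev_surj xX) => i Ei; have : i \in pre X B by rewrite inE -Ei.
  by rewrite -E inE.
apply/ncP => S1 S2 a b c d /imsetP [B1 + ->] /imsetP [B2 + ->]; rewrite !inE.
case/andP => H1 _ /andP [H2 _] Hne ac cb bd.
move=> aB bB cC dC.
apply: (HN B1 B2 (ev X a) (ev X b) (ev X c) (ev X d)) => //; try by rewrite -ev_mono.
by apply/negP => /eqP E; move/negP: Hne; apply; rewrite E.
Qed.

Lemma mkpart_eq m1 m2 (A1 : {set {set 'I_m1}}) (A2 : {set {set 'I_m2}})
  (f1 : 'I_m1 -> 'I_n) (f2 : 'I_m2 -> 'I_n) : m1 = m2 ->
  (forall i j, val i = val j -> f1 i = f2 j) -> injective f1 ->
  [set f1 @: Z | Z : {set _} in A1] = [set f2 @: Z | Z : {set _} in A2] -> mkpart A1 = mkpart A2.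
Proof.
move=> E; subst m2 => Hf inj HA; congr mkpart.
have ef : f1 =1 f2 by move=> i; apply: Hf.
have : [set f2 @: Z | Z : {set _} in A2] = [set f1 @: Z | Z : {set _} in A2].
  by apply: eq_imset => Z; apply: eq_imset => i; rewrite ef.
move=> E2; rewrite E2 in HA.
exact: (imset_inj (imset_inj inj)).
Qed.

Lemma enum_img X (Y' : {set 'I_#|X|}) : map (ev X) (enum Y') = enum (ev X @: Y').
Proof.
apply: (@irr_sorted_eq _ (fun x y : 'I_n => (x < y)%N)).
- by move=> u v w; apply: ltn_trans.
- by move=> u; rewrite ltnn.
- rewrite sorted_map; apply: sub_sorted (enum_sorted Y') => u v /=; by rewrite ev_mono.
- exact: enum_sorted.
move=> x; rewrite mem_enum; apply/mapP/imsetP => [[i] | [i]]; rewrite ?mem_enum => Hi ->.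
  by exists i.
by exists i; rewrite ?mem_enum.
Qed.

Lemma restr_restr R X (Y' : {set 'I_#|X|}) : restr (pr X R) Y' = restr R (ev X @: Y').
Proof.
rewrite !restrE; set Y := ev X @: Y'.
apply: (@mkpart_eq _ _ _ _ (fun i => ev X (ev Y' i)) (ev Y)).
- by rewrite card_imset //; apply: ev_inj.
- move=> i j Eij; rewrite (ev_nth (ev X (ev Y' i)) j) /Y -enum_img.
  rewrite (nth_map (ev Y' i)); last by rewrite -Eij -cardE ltn_ord.
  by rewrite -Eij -(ev_nth (ev Y' i)).
- by move=> i j /ev_inj /ev_inj.
have sYX : Y \subset X by apply/subsetP => x /imsetP [i _ ->]; apply: evP.
have key : forall B, ev X @: (pre X B :&: Y') = B :&: Y.
  move=> B; rewrite imsetI; last by move=> u v _ _; apply: ev_inj.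
  by rewrite ev_pre -setIA (setIidPr sYX).
apply/setP => S; apply/imsetP/imsetP => [[Z] | [Z]].
  case/imsetP => S' + -> ->; rewrite inE => /andP [/imsetP [B + ->]]; rewrite inE.
  case/andP => HB _ Hne.
  exists (pre Y B).
    apply/imsetP; exists B => //; rewrite inE HB /= -key imset_eq0 //.
  by rewrite ev_pre -key -ev_pre imset_comp.
case/imsetP => B + -> ->; rewrite inE => /andP [HB Hne].
exists (pre Y' (pre X B)).
  apply/imsetP; exists (pre X B) => //; rewrite inE.
  have Hne' : pre X B :&: Y' != set0 by rewrite -(imset_eq0 (ev X)) key.
  rewrite Hne' andbT; apply/imsetP; exists B => //; rewrite inE HB /=.
  apply: contraNneq Hne => E; apply/eqP/setP => x; rewrite !inE.
  apply/negbTE/negP => /andP [xB xY].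
  have : x \in B :&: X by rewrite inE xB (subsetP sYX x xY).
  by rewrite E inE.
have -> : [set ev X (ev Y' i) | i in pre Y' (pre X B)] = ev X @: (ev Y' @: pre Y' (pre X B)).
  by rewrite -imset_comp.
by rewrite !ev_pre key.
Qed.

End PR2.

Lemma bigcup_seqP (T I : finType) (s : seq I) (F : I -> {set T}) x :
  reflect (exists2 i, i \in s & x \in F i) (x \in \bigcup_(i <- s) F i).
Proof.
elim: s => [|a s IH]; first by rewrite big_nil inE; constructor => [[i]].
rewrite big_cons inE; apply: (iffP orP) => [[H|/IH [i Hi H]]|[i]].
- by exists a; rewrite ?mem_head.
- by exists i; rewrite // inE Hi orbT.
rewrite inE => /orP [/eqP -> H|Hi H]; first by left.
by right; apply/IH; exists i.
Qed.

Definition leP (a b : part) := (pickle a <= pickle b)%N.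
Definition sortp (s : seq part) : seq part := sort leP s.
Definition normt (x : tens) : tens := (sortp x.1, sortp x.2).
Definition eqv (s1 s2 : seq tens) := perm_eq (map normt s1) (map normt s2).
Definition tprod (s1 s2 : seq tens) : seq tens := [seq (x.1 ++ y.1, x.2 ++ y.2) | x <- s1, y <- s2].

Lemma sortpP s1 s2 : reflect (sortp s1 = sortp s2) (perm_eq s1 s2).
Proof.
apply: perm_sortP.
- by move=> a b; apply: leq_total.
- by move=> a b c; apply: leq_trans.
move=> a b /anti_leq E; exact: (pcan_inj (@pickleK _) E).
Qed.

Lemma tens_equivE x y : tens_equiv x y = (normt x == normt y).
Proof.
rewrite /tens_equiv /normt xpair_eqE.
by apply/andP/andP => [[/sortpP -> /sortpP ->]|[/eqP/sortpP ? /eqP/sortpP ?]].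
Qed.

Lemma coefE (k : nzRingType) b s : coef k b s = ((count (pred1 (normt b)) (map normt s))%:R)%R.
Proof.
rewrite /coef count_map; elim: s => [|x s IH]; first by rewrite big_nil.
by rewrite big_cons IH /= natrD tens_equivE.
Qed.

Lemma eqv_coef (k : nzRingType) b s1 s2 : eqv s1 s2 -> coef k b s1 = coef k b s2.
Proof. by rewrite !coefE => /permP ->. Qed.

Lemma normt_cat x y : normt (x.1 ++ y.1, x.2 ++ y.2) =
  normt ((normt x).1 ++ (normt y).1, (normt x).2 ++ (normt y).2).
Proof.
rewrite /normt /=; congr pair; apply/sortpP; apply: perm_cat; by rewrite perm_sym perm_sort.
Qed.

Lemma eqv_tprod s1 s2 t1 t2 : eqv s1 t1 -> eqv s2 t2 -> eqv (tprod s1 s2) (tprod t1 t2).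
Proof.
move=> H1 H2; rewrite /eqv /tprod !map_allpairs.
rewrite (eq_allpairs _ _ (fun x y => normt_cat x y)).
rewrite [X in perm_eq _ X](eq_allpairs _ _ (fun x y => normt_cat x y)).
rewrite -(allpairs_mapl (fun x y => normt (x.1 ++ (normt y).1, x.2 ++ (normt y).2)) normt).
rewrite -(allpairs_mapl (fun x y => normt (x.1 ++ (normt y).1, x.2 ++ (normt y).2)) normt).
rewrite -(allpairs_mapr (fun x y => normt (x.1 ++ y.1, x.2 ++ y.2)) (fun _ => normt)).
rewrite -(allpairs_mapr (fun x y => normt (x.1 ++ y.1, x.2 ++ y.2)) (fun _ => normt)).
exact: perm_allpairs.
Qed.

Lemma eq_permE (T : eqType) (s1 s2 : seq T) : s1 = s2 -> perm_eq s1 s2.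
Proof. by move->. Qed.

Section Main.
Variable n : nat.
Variables P Q : {set {set 'I_n}}.
Hypothesis HP : is_ncp P.
Hypothesis HQ : is_ncp Q.
Hypothesis HPQ : ncp_le P Q.

Let pP : partition P setT := proj1 (andP HP).
Let pQ : partition Q setT := proj1 (andP HQ).

Lemma blockPQ B0 tau x : B0 \in P -> tau \in Q -> x \in B0 -> x \in tau -> B0 \subset tau.
Proof.
move=> HB Ht xB xt; case: (le_partitionP pP pQ HPQ B0 HB) => t' Ht' sB.
by rewrite (partition_uniq pQ Ht Ht' xt (subsetP sB x xB)).
Qed.

Definition Above (tau : {set 'I_n}) : seq {set {set 'I_n}} :=
  [seq liftp tau Q' | Q' <- ncp_above (pr tau P)].

Lemma mem_ncp_above m (X Y : {set {set 'I_m}}) : (Y \in ncp_above X) = is_ncp Y && ncp_le X Y.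
Proof. by rewrite mem_filter mem_enum inE andbT. Qed.

Section AboveProps.
Variable tau : {set 'I_n}.
Hypothesis Ht : tau \in Q.
Variable L : {set {set 'I_n}}.
Hypothesis HL : L \in Above tau.

Lemma above_ex : exists Q', [/\ L = liftp tau Q', is_ncp Q' & ncp_le (pr tau P) Q'].
Proof.
case/mapP: HL => Q' HQ' ->; exists Q'; move: HQ'; rewrite mem_ncp_above => /andP [? ?].
by split.
Qed.

Lemma above_i B : B \in L -> B \subset tau /\ B != set0.
Proof.
case: above_ex => Q' [-> /andP [pQ' _] _] /imsetP [B' HB' ->]; split.
  by apply/subsetP => x /imsetP [i _ ->]; apply: evP.
by rewrite imset_eq0; apply: partition_ne0 pQ' HB'.
Qed.

Lemma above_ii x : x \in tau -> exists2 B, B \in L & x \in B.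
Proof.
case: above_ex => Q' [-> /andP [pQ' _] _] xt; case: (ev_surj xt) => i ->.
case: (partition_cov i pQ') => B' HB' iB'.
by exists (ev tau @: B'); [apply: imset_f | apply: imset_f].
Qed.

Lemma above_iii B C x : B \in L -> C \in L -> x \in B -> x \in C -> B = C.
Proof.
case: above_ex => Q' [-> /andP [pQ' _] _] /imsetP [B' HB' ->] /imsetP [C' HC' ->].
case/imsetP => i iB ->; rewrite mem_imset; last exact: ev_inj.
by move=> iC; rewrite (partition_uniq pQ' HB' HC' iB iC).
Qed.

Lemma above_iv B C (a b c d : 'I_n) : B \in L -> C \in L -> B != C ->
   (a < c)%N -> (c < b)%N -> (b < d)%N -> a \in B -> b \in B -> c \in C -> d \in C -> False.
Proof.
case: above_ex => Q' [-> /andP [_ /ncP HN] _] /imsetP [B' HB' ->] /imsetP [C' HC' ->] Hne.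
move=> ac cb bd /imsetP [a' aB Ea] /imsetP [b' bB Eb] /imsetP [c' cC Ec] /imsetP [d' dC Ed].
subst a b c d.
apply: (HN B' C' a' b' c' d') => //; try by rewrite ev_mono.
by apply: contraNneq Hne => ->.
Qed.

Lemma above_v B B0 x : B \in L -> B0 \in P -> x \in B -> x \in B0 -> B0 \subset B.
Proof.
case: above_ex => Q' [-> /andP [pQ' _] HleQ] /imsetP [B' HB' ->] HB0 /imsetP [i iB ->] xB0.
have pPt : partition (pr tau P) setT by case/andP: (is_ncp_pr tau HP).
have Hpre : pre tau B0 \in pr tau P.
  apply/imsetP; exists B0 => //; rewrite inE HB0 /=; apply/set0Pn; exists (ev tau i).
  by rewrite inE xB0 evP.
case: (le_partitionP pPt pQ' HleQ _ Hpre) => C' HC' sC'.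
have iC' : i \in C' by apply: (subsetP sC'); rewrite inE.
move: sC'; rewrite (partition_uniq pQ' HC' HB' iC' iB) => sB'.
have sBt : B0 \subset tau := blockPQ HB0 Ht xB0 (evP i).
apply/subsetP => y yB0; case: (ev_surj (subsetP sBt y yB0)) => j Ej; subst y.
by apply: imset_f; apply: (subsetP sB'); rewrite inE.
Qed.

End AboveProps.

Definition Ms (ts : seq {set 'I_n}) : seq {set {set 'I_n}} :=
  foldr (fun tau acc => [seq L :|: M | L <- Above tau, M <- acc]) [:: set0] ts.

Lemma Ms_memE ts M : uniq ts -> M \in Ms ts ->
  exists Lf : {set 'I_n} -> {set {set 'I_n}},
    (forall tau, tau \in ts -> Lf tau \in Above tau) /\ M = \bigcup_(tau <- ts) Lf tau.
Proof.
elim: ts M => [|t ts IH] M /=.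
  by rewrite inE => _ /eqP ->; exists (fun _ => set0); split => //; rewrite big_nil.
case/andP => tnin Hu /allpairsP [[L M'] /= [HL HM' ->]].
case: (IH M' Hu HM') => Lf [HLf EM'].
exists (fun tau => if tau == t then L else Lf tau); split.
  by move=> tau; rewrite inE; case: eqP => [-> //|_ /= /HLf].
rewrite big_cons eqxx EM'; congr (_ :|: _).
rewrite big_seq_cond [RHS]big_seq_cond; apply: eq_bigr => tau /andP [Htau _].
by case: eqP => // E; move: tnin; rewrite -E Htau.
Qed.

Lemma Ms_memI ts (Lf : {set 'I_n} -> {set {set 'I_n}}) :
  (forall tau, tau \in ts -> Lf tau \in Above tau) -> \bigcup_(tau <- ts) Lf tau \in Ms ts.
Proof.
elim: ts => [|t ts IH] H /=; first by rewrite big_nil mem_head.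
rewrite big_cons; apply/allpairsP; exists (Lf t, \bigcup_(tau <- ts) Lf tau); split => //=.
  by apply: H; rewrite mem_head.
by apply: IH => tau Htau; apply: H; rewrite inE Htau orbT.
Qed.

Lemma Ms_blocks ts M B : uniq ts -> {subset ts <= Q} -> M \in Ms ts -> B \in M ->
  exists2 tau, tau \in ts & (B \subset tau) && (B != set0).
Proof.
move=> Hu Hs /(Ms_memE Hu) [Lf [HLf ->]] /bigcup_seqP [tau Htau HB].
by exists tau => //; case: (above_i (HLf _ Htau) HB) => -> ->.
Qed.

Lemma Ms_interval M : M \in Ms (enum Q) -> [&& is_ncp M, ncp_le P M & ncp_le M Q].
Proof.
move/(Ms_memE (enum_uniq _)) => [Lf [HLf EM]].
have HLf' : forall tau, tau \in Q -> Lf tau \in Above tau by move=> tau Ht; apply: HLf; rewrite mem_enum.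
have memM : forall B, B \in M -> exists2 tau, tau \in Q & B \in Lf tau.
  by move=> B; rewrite EM => /bigcup_seqP [tau]; rewrite mem_enum => ? ?; exists tau.
have memM' : forall B tau, tau \in Q -> B \in Lf tau -> B \in M.
  by move=> B tau Ht HB; rewrite EM; apply/bigcup_seqP; exists tau; rewrite ?mem_enum.
have pM : partition M setT.
  apply: partition_intro.
  - move=> x; case: (partition_cov x pQ) => tau Ht xt.
    case: (above_ii (HLf' _ Ht) xt) => B HB xB; exists B => //; exact: memM' HB.
  - move=> B C x /memM [t1 H1 HB] /memM [t2 H2 HC] xB xC.
    case: (above_i (HLf' _ H1) HB) => sB _; case: (above_i (HLf' _ H2) HC) => sC _.
    have E := partition_uniq pQ H1 H2 (subsetP sB x xB) (subsetP sC x xC); subst t2.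
    exact: (above_iii (HLf' _ H1) HB HC xB xC).
  apply/negP => /memM [t H1 HB].
  by case: (above_i (HLf' _ H1) HB); rewrite eqxx.
apply/and3P; split.
- apply/andP; split => //; apply/ncP => B C a b c d /memM [t1 H1 HB] /memM [t2 H2 HC] Hne ac cb bd aB bB cC dC.
  case: (above_i (HLf' _ H1) HB) => sB _; case: (above_i (HLf' _ H2) HC) => sC _.
  case: (eqVneq t1 t2) => [E|Ht12].
    subst t2; exact: (above_iv (HLf' _ H1) HB HC Hne ac cb bd aB bB cC dC).
  case/andP: HQ => _ /ncP HNQ.
  exact: (HNQ t1 t2 a b c d H1 H2 Ht12 ac cb bd (subsetP sB _ aB) (subsetP sB _ bB) (subsetP sC _ cC) (subsetP sC _ dC)).
- apply/(le_partitionP pP pM) => B0 HB0.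
  case/set0Pn: (partition_ne0 pP HB0) => x xB0.
  case: (partition_cov x pM) => B HB xB; exists B => //.
  case/memM: HB => t Ht HB.
  exact: (above_v Ht (HLf' _ Ht) HB HB0 xB xB0).
apply/(le_partitionP pM pQ) => B /memM [t Ht HB]; exists t => //.
by case: (above_i (HLf' _ Ht) HB).
Qed.

Lemma interval_Ms M : [&& is_ncp M, ncp_le P M & ncp_le M Q] -> M \in Ms (enum Q).
Proof.
case/and3P => HM HPM HMQ; have pM : partition M setT by case/andP: HM.
have bMQ : forall C tau x, C \in M -> tau \in Q -> x \in C -> x \in tau -> C \subset tau.
  move=> C tau x HC Ht xC xt; case: (le_partitionP pM pQ HMQ C HC) => t' Ht' sC.
  by rewrite (partition_uniq pQ Ht Ht' xt (subsetP sC x xC)).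
have -> : M = \bigcup_(tau <- enum Q) [set C in M | C \subset tau].
  apply/setP => C; apply/idP/bigcup_seqP => [HC|[tau _]]; last by rewrite inE => /andP [].
  case: (le_partitionP pM pQ HMQ C HC) => t Ht sC.
  by exists t; rewrite ?mem_enum // inE HC sC.
apply: Ms_memI => tau; rewrite mem_enum => Ht.
have -> : [set C in M | C \subset tau] = liftp tau (pr tau M).
  apply/setP => S; rewrite inE; apply/andP/imsetP => [[HS sS]|[Z /imsetP [C] + -> ->]].
    exists (pre tau S); last by rewrite ev_pre (setIidPl sS).
    apply/imsetP; exists S => //; rewrite inE HS (setIidPl sS) /=.
    exact: partition_ne0 pM HS.
  rewrite inE => /andP [HC /set0Pn [x /setIP [xC xt]]].
  have sC := bMQ C tau x HC Ht xC xt.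
  by rewrite ev_pre (setIidPl sC).
apply: map_f; rewrite mem_ncp_above is_ncp_pr //=.
have pPt : partition (pr tau P) setT by case/andP: (is_ncp_pr tau HP).
have pMt : partition (pr tau M) setT by case/andP: (is_ncp_pr tau HM).
apply/(le_partitionP pPt pMt) => Z /imsetP [B0]; rewrite inE => /andP [HB0 Hne] ->.
case: (le_partitionP pP pM HPM B0 HB0) => C HC sBC.
exists (pre tau C).
  apply/imsetP; exists C => //; rewrite inE HC /=.
  apply: contraNneq Hne => E; apply/eqP; apply/setP => x; rewrite !inE.
  apply/negbTE/negP => /andP [xB xt].
  have : x \in C :&: tau by rewrite inE (subsetP sBC x xB) xt.
  by rewrite E inE.
by apply/subsetP => i; rewrite !inE => /(subsetP sBC).
Qed.

Lemma Above_uniq tau : uniq (Above tau).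
Proof.
rewrite map_inj_in_uniq; first by apply: filter_uniq; exact: enum_uniq.
move=> Q1 Q2.
rewrite !mem_ncp_above => /andP [/andP [p1 _] _] /andP [/andP [p2 _] _] E.
case/and3P: p1 => _ _ n1; case/and3P: p2 => _ _ n2.
by rewrite -(pr_lift n1) E pr_lift.
Qed.

Lemma Ms_uniq ts : uniq ts -> {subset ts <= Q} -> uniq (Ms ts).
Proof.
elim: ts => [//|t ts IH] /andP [tnin Hu] Hs /=.
have Ht : t \in Q by apply: Hs; rewrite mem_head.
have Hs' : {subset ts <= Q} by move=> u Hu'; apply: Hs; rewrite inE Hu' orbT.
apply: allpairs_uniq; [exact: Above_uniq | exact: IH |].
have split : forall L M, L \in Above t -> M \in Ms ts ->
   L = [set B in L :|: M | B \subset t] /\ M = [set B in L :|: M | ~~ (B \subset t)].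
  move=> L M HL HM.
  have nM : forall B, B \in M -> ~~ (B \subset t).
    move=> B HB; case: (Ms_blocks Hu Hs' HM HB) => tau Htau /andP [sB /set0Pn [x xB]].
    apply/negP => sBt.
    have E := partition_uniq pQ (Hs' _ Htau) Ht (subsetP sB x xB) (subsetP sBt x xB).
    by move: tnin; rewrite -E Htau.
  split; apply/setP => B; rewrite !inE.
    case HB: (B \in L); first by case: (above_i HL HB) => ->.
    by rewrite /=; apply/esym/negbTE/negP => /andP [HBM sB]; move: (nM B HBM); rewrite sB.
  case HB: (B \in M); first by rewrite (nM B HB) orbT.
  by rewrite orbF; apply/esym/negbTE/negP => /andP [HBL /negP sB]; apply: sB; case: (above_i HL HBL).
move=> [L1 M1] [L2 M2] /allpairsP [[x1 y1] [/= H1 H1' [-> ->]]] /allpairsP [[x2 y2] [/= H2 H2' [-> ->]]] /= E.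
case: (split _ _ H1 H1') => E1 F1; case: (split _ _ H2 H2') => E2 F2.
by congr pair; [rewrite E1 E2 E | rewrite F1 F2 E].
Qed.

Lemma Ms_perm : perm_eq (Ms (enum Q)) (ncp_interval P Q).
Proof.
apply: uniq_perm; first by apply: Ms_uniq; [exact: enum_uniq | move=> t; rewrite mem_enum].
  by rewrite filter_uniq ?enum_uniq.
move=> M; rewrite mem_filter mem_enum inE andbT.
by apply/idP/idP; [exact: Ms_interval | exact: interval_Ms].
Qed.

Lemma pr_union m (X : {set 'I_m}) (L M : {set {set 'I_m}}) :
  (forall B, B \in M -> B :&: X = set0) -> pr X (L :|: M) = pr X L.
Proof.
move=> H; apply/setP => Z; apply/imsetP/imsetP => [[B] | [B]]; rewrite !inE.
  case/andP => /orP [HB|HB] Hne ->; first by exists B; rewrite // inE HB.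
  by move: Hne; rewrite H ?eqxx.
by case/andP => HB Hne ->; exists B; rewrite // !inE HB.
Qed.

Lemma perm_enum_lift (tau : {set 'I_n}) (Q' : {set {set 'I_#|tau|}}) :
  perm_eq (map (fun B' : {set 'I_#|tau|} => ev tau @: B') (enum Q')) (enum (liftp tau Q')).
Proof.
apply: uniq_perm.
- rewrite map_inj_uniq ?enum_uniq //; exact: imset_inj (@ev_inj _ tau).
- exact: enum_uniq.
move=> Z; rewrite mem_enum; apply/mapP/imsetP => [[B']|[B']]; rewrite ?mem_enum => H ->.
  by exists B'.
by exists B'; rewrite ?mem_enum.
Qed.

Lemma eqv_delta_gen t : eqv (delta_gen (restr P t)) [seq ([:: restr L t], quot P L) | L <- Above t].
Proof.
rewrite /eqv /Above restrE.
have -> : delta_gen (mkpart (pr t P)) = [seq ([:: mkpart Q0], quot (pr t P) Q0) | Q0 <- ncp_above (pr t P)] by [].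
apply: eq_permE; rewrite -!map_comp.
apply/eq_in_map => Q'; rewrite mem_ncp_above => /andP [/andP [pQ' _] _] /=.
rewrite /normt /= restrE pr_lift; last by case/and3P: pQ'.
congr pair; apply/sortpP; rewrite /quot.
have -> : [seq restr (pr t P) tau | tau <- enum Q'] = map (restr P) (map (fun B' : {set 'I_#|t|} => ev t @: B') (enum Q')).
  by rewrite -map_comp; apply: eq_map => B'; rewrite /= restr_restr.
exact: perm_map (perm_enum_lift Q').
Qed.

Definition lat ts M := ([seq restr M tau | tau <- ts], quot P M).

Lemma claim1 ts : uniq ts -> {subset ts <= Q} ->
  eqv (delta_mono [seq restr P tau | tau <- ts]) [seq lat ts M | M <- Ms ts].
Proof.
elim: ts => [|t ts IH] /=; first by rewrite /lat /quot enum_set0.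
case/andP => tnin Hu Hs.
have Ht : t \in Q by apply: Hs; rewrite mem_head.
have Hs' : {subset ts <= Q} by move=> u Hu'; apply: Hs; rewrite inE Hu' orbT.

have E1 := eqv_tprod (eqv_delta_gen t) (IH Hu Hs').
apply: (perm_trans E1); rewrite /tprod allpairs_mapl allpairs_mapr map_allpairs /=.
apply: eq_permE; rewrite !map_allpairs.
apply/eq_in_allpairs => L M HL HM /=.
have disjM : forall B, B \in M -> B :&: t = set0.
  move=> B HB; case: (Ms_blocks Hu Hs' HM HB) => tau Htau /andP [sB _].
  apply/setP => x; rewrite !inE; apply/negbTE/negP => /andP [xB xt].
  have E := partition_uniq pQ (Hs' _ Htau) Ht (subsetP sB x xB) xt.
  by move: tnin; rewrite -E Htau.
have disjL : forall tau, tau \in ts -> forall B, B \in L -> B :&: tau = set0.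
  move=> tau Htau B HB; case: (above_i HL HB) => sB _.
  apply/setP => x; rewrite !inE; apply/negbTE/negP => /andP [xB xt].
  have E := partition_uniq pQ (Hs' _ Htau) Ht xt (subsetP sB x xB).
  by move: tnin; rewrite -E Htau.
rewrite /normt /lat /=; congr pair.
  rewrite [restr (L :|: M) t]restrE pr_union // -restrE; congr sortp; congr cons.
  apply/eq_in_map => tau Htau; rewrite [restr (L :|: M) tau]restrE setUC pr_union ?restrE //.
  exact: disjL.
apply/sortpP; rewrite /quot -map_cat; apply: perm_map.
rewrite perm_sym; apply: (perm_trans (enum_setU L M)); rewrite undup_id //.
rewrite cat_uniq !enum_uniq andbT /=; apply/hasPn => B; rewrite !mem_enum => HBM.
apply/negP => HBL; case: (above_i HL HBL) => sB /set0Pn [x xB].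
have : x \in B :&: t by rewrite inE xB (subsetP sB x xB).
by rewrite disjM // inE.
Qed.

Lemma card_pr_eq1 : (forall tau, tau \in Q -> #|pr tau P| == 1%N) -> P = Q.
Proof.
move=> H.
have QP : forall tau, tau \in Q -> tau \in P.
  move=> tau Ht; case/cards1P: (H tau Ht) => Z EZ.
  case/set0Pn: (partition_ne0 pQ Ht) => x xt.
  case: (partition_cov x pP) => B0 HB0 xB0.
  have inpr : forall B y, B \in P -> y \in B -> y \in tau -> pre tau B \in pr tau P.
    move=> B y HB yB yt; apply/imsetP; exists B => //; rewrite inE HB /=.
    by apply/set0Pn; exists y; rewrite inE yB yt.
  suff -> : tau = B0 by [].
  apply/eqP; rewrite eqEsubset; apply/andP; split; last exact: blockPQ HB0 Ht xB0 xt.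
  apply/subsetP => y yt; case: (partition_cov y pP) => B1 HB1 yB1.
  have E1 := inpr _ _ HB1 yB1 yt; have E0 := inpr _ _ HB0 xB0 xt.
  rewrite EZ inE in E1; rewrite EZ inE in E0.
  have := (eqP E1); rewrite -(eqP E0) => Epre.
  case: (ev_surj yt) => j Ej; subst y.
  have : j \in pre tau B1 by rewrite inE.
  by rewrite Epre inE.
apply/setP => B; apply/idP/idP => [HB|]; last exact: QP.
case/set0Pn: (partition_ne0 pP HB) => x xB.
case: (partition_cov x pQ) => tau Ht xt.
by rewrite (partition_uniq pP HB (QP _ Ht) xB xt).
Qed.

Lemma pr_self tau : tau \in Q -> pr tau Q = [set pre tau tau].
Proof.
move=> Ht; apply/setP => Z; rewrite inE; apply/imsetP/eqP => [[B]|->].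
  rewrite inE => /andP [HB /set0Pn [x /setIP [xB xt]]] ->.
  by rewrite (partition_uniq pQ HB Ht xB xt).
exists tau => //; rewrite inE Ht setIid /=; exact: partition_ne0 pQ Ht.
Qed.

End Main.

Unset Implicit Arguments.
Local Open Scope ring_scope.

Theorem mainTheorem6 (k : fieldType) (n : nat) (P Q : {set {set 'I_n}}) :
  (0 < n)%N -> is_ncp P -> is_ncp Q -> ncp_le P Q ->
  (forall b : tens, coef k b (delta_mono (quot P Q)) = coef k b (lat_delta_Phi P Q))
  /\ eps_mono k (quot P Q) = (P == Q)%:R.
Proof.
move=> _ HP HQ HPQ; split.
  move=> b; apply: eqv_coef.
  have H1 := claim1 P HQ (enum_uniq Q) (fun t (Ht : t \in enum Q) => eq_ind _ is_true Ht _ (mem_enum Q t)).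
  apply: (perm_trans H1).
  rewrite /lat_delta_Phi; apply: perm_map; exact: perm_map (Ms_perm HP HQ HPQ).
rewrite /eps_mono /quot big_map.
have E : forall tau, (#|tagged (restr P tau)| == 1%N) = (#|pr tau P| == 1%N) by move=> tau; rewrite restrE.
case: eqP => [EPQ|NPQ].
  subst Q; apply: big1_seq => tau /andP [_]; rewrite mem_enum => Ht.
  by rewrite E (pr_self HQ Ht) cards1.
apply/eqP; rewrite prodf_seq_eq0; apply/hasP.
have [tau Ht Hne] : exists2 tau, tau \in Q & #|pr tau P| != 1%N.
  case: (boolP [exists tau in Q, #|pr tau P| != 1%N]) => [/exists_inP //|/exists_inPn Hall].
  exfalso; apply: NPQ.
  by apply: (card_pr_eq1 HP HQ HPQ) => tau Ht; move: (Hall tau Ht); rewrite negbK.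
by exists tau; rewrite ?mem_enum //= E (negbTE Hne).
Qed.
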